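(* Let $n=12$. There is no permutation sequence $(\pi_1,\ldots,\pi_{12})$ of length $12$ with the following property: for every $t\in[12]$, every $s\ge 1$ with $s+t-1\le 12$, and every player $i\in N$, there exists a day $d\in\{s,s+1,\ldots,s+t-1\}$ with $\pi_d(i)\le \lceil 12/t\rceil$.
   Context: $N$ is a set of $n$ players and $[n]=\{1,\ldots,n\}$ a set of $n$ items (smaller number = better item). A permutation sequence of length $n$ is an ordered tuple $(\pi_1,\ldots,\pi_n)$ of bijections $\pi_d : N\to[n]$; on day $d$ player $i$ receives item $\pi_d(i)$. *)

(* Defs.v *)
From mathcomp Require Import all_boot all_fingroup.
Set Implicit Arguments. Unset Strict Implicit. Unset Printing Implicit Defensive.

(* Players N = 'I_n, items [n] = {1..n} represented by 'I_n with item k <-> ordinal k-1.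
   A permutation sequence of length n: days 1..n, day d <-> index d-1 : 'I_n;
   pi d : {perm 'I_n} is the bijection N -> [n]. *)
Definition perm_seq (n : nat) := 'I_n -> {perm 'I_n}.

Definition item_of n (pi : perm_seq n) (d i : 'I_n) : nat := (pi d i).+1.

Definition ceil_div (n t : nat) : nat := (n + t - 1) %/ t.

Definition good_seq n (pi : perm_seq n) : Prop :=
  forall t s : nat, 1 <= t <= n -> 1 <= s -> s + t - 1 <= n ->
  forall i : 'I_n, exists d : 'I_n,
    s <= d.+1 <= s + t - 1 /\ item_of pi d i <= ceil_div n t.

(* Main.v *)
Require Import Defs.
From mathcomp Require Import all_boot all_fingroup.

Lemma uniq_win (pi : perm_seq 12) (W K : {set 'I_12}) :
  #|W| * #|K| = 12 -> (forall i, exists2 d, d \in W & pi d i \in K) ->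
  forall i d d', d \in W -> d' \in W -> pi d i \in K -> pi d' i \in K -> d = d'.
Proof.
move=> hc hex.
have hw : forall i, {d | (d \in W) && (pi d i \in K)}.
  move=> i; apply: sigW; have [d d1 d2] := hex i; exists d; exact/andP.
pose w := fun i => sval (hw i).
have hwP i : (w i \in W) && (pi (w i) i \in K) := svalP (hw i).
pose h i := (w i, pi (w i) i).
have hinj : injective h.
  move=> i j [e1 e2]; rewrite e1 in e2; exact: perm_inj e2.
have himg : h @: setT = setX W K.
  apply/eqP; rewrite eqEcard cardsX card_imset // cardsT card_ord hc leqnn andbT.
  apply/subsetP => _ /imsetP [i _ ->]; rewrite inE /=; exact: hwP.
have key : forall d i, d \in W -> pi d i \in K -> w i = d.
  move=> d i dW piK.
  have : (d, pi d i) \in h @: setT by rewrite himg inE /= dW piK.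
  case/imsetP => j _ [e1 e2]; rewrite -e1 in e2.
  by rewrite (perm_inj e2) e1.
move=> i d d' dW d'W h1 h2; by rewrite -(key d i) // (key d' i).
Qed.

Lemma card_pre (p : {perm 'I_12}) (K : {set 'I_12}) :
  #|[set i | p i \in K]| = #|K|.
Proof. rewrite -(card_preimset K (@perm_inj _ p)); apply: eq_card => x; by rewrite !inE. Qed.

Lemma card_ordP n (P : pred nat) : #|[set x : 'I_n | P x]| = count P (iota 0 n).
Proof. by rewrite cardsE cardE size_filter -val_enum_ord count_map enumT. Qed.

Theorem mainTheorem8 : ~ exists pi : perm_seq 12, good_seq pi.
Proof.
case => pi H.
pose W6 := [set d : 'I_12 | d < 6].
pose W15 := [set d : 'I_12 | 1 <= d < 5].
pose K2 := [set x : 'I_12 | x < 2].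
pose K3 := [set x : 'I_12 | x < 3].
have ex6 : forall i, exists2 d, d \in W6 & pi d i \in K2.
  move=> i; have [d [hd hi]] := H 6 1 erefl erefl erefl i.
  by exists d; rewrite inE; [case/andP: hd | exact: hi].
have ex15 : forall i, exists2 d, d \in W15 & pi d i \in K3.
  move=> i; have [d [hd hi]] := H 4 2 erefl erefl erefl i.
  by exists d; rewrite inE; [exact: hd | exact: hi].
have c6 : #|W6| * #|K2| = 12 by by rewrite /W6 /K2 (card_ordP 12 (fun d => d < 6)) (card_ordP 12 (fun d => d < 2)).
have u6 := @uniq_win pi W6 K2 c6 ex6.
have c15 : #|W15| * #|K3| = 12 by by rewrite /W15 /K3 (card_ordP 12 (fun d => 1 <= d < 5)) (card_ordP 12 (fun d => d < 3)).
have u15 := @uniq_win pi W15 K3 c15 ex15.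
pose d0 : 'I_12 := Ordinal (isT : 0 < 12).
pose d4 : 'I_12 := Ordinal (isT : 4 < 12).
pose A1 := [set i | pi d0 i \in K2].
pose A5 := [set i | pi d4 i \in K2].
pose B := [set i | pi d0 i \in K3].
have disj : A1 :&: A5 = set0.
  apply/setP => i; rewrite !inE; apply/negP => /andP [h1 h2].
  by have := u6 i d0 d4; rewrite !inE => /(_ isT isT h1 h2) /(congr1 val).
have sub : A1 :|: A5 \subset B.
  apply/subsetP => i; rewrite !inE => /orP [h|h].
    exact: ltnW.
  have [d [hd hi]] := H 4 1 erefl erefl erefl i.
  case/andP: hd => _ hd.
  have h3 : pi d4 i \in K3 by rewrite inE; exact: ltnW.
  case: (posnP d) => [d0e | dpos].
    have -> : d0 = d by apply/val_inj; rewrite /= d0e.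
    exact: hi.
  have dW : d \in W15 by rewrite inE dpos; exact: (leq_trans hd).
  have := u15 i d d4 dW (ltac:(by rewrite inE)) (ltac:(rewrite inE; exact: hi)) h3.
  move=> /(congr1 val) /= e; by rewrite e in hd.
have := subset_leq_card sub.
by rewrite cardsU disj cards0 !card_pre /K2 /K3 (card_ordP 12 (fun d => d < 2)) (card_ordP 12 (fun d => d < 3)).
Qed.
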